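(* Let $0<p<1$, let $m$ be a median of $\vartheta(G(n,p))$ (i.e. $\Pr(\vartheta(G(n,p))\leq m)\geq1/2$ and $\Pr(\vartheta(G(n,p))\geq m)\geq1/2$), let $\vartheta_0>0$ be any number, and let $\xi\geq10$. Then $$\Pr\big(m+\xi\leq\vartheta(G(n,p))\leq\vartheta_0\big)\leq 2\exp(-\xi^2/(5\vartheta_0)).$$
   Context: $G(n,p)$ is the random graph on $\{1,\dots,n\}$ with each possible edge present independently with probability $p$. $\vartheta(G)$ is the Lovász number of $G$; equivalently, $\vartheta(G)$ is the maximum of $\sum_{i=1}^n c(v_i)$ over all tuples $(v_1,\dots,v_n)$ of vectors in some $\mathbb R^d$ with $v_i\perp v_j$ whenever $\{i,j\}$ is an edge of $G$, where $c(a)=a_1^2/\|a\|^2$ for $a\neq0$ and $c(0)=0$. *)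

(* Defs.v *)
From HB Require Import structures.
From mathcomp Require Import all_boot all_order all_algebra.
From mathcomp Require Import all_classical all_reals.
From mathcomp Require Import all_analysis.
Set Implicit Arguments. Unset Strict Implicit. Unset Printing Implicit Defensive.
Import Order.TTheory GRing.Theory Num.Theory.
Local Open Scope ring_scope.
Local Open Scope classical_set_scope.

(* Potential edges of a graph on {1..n} (here 'I_n): unordered pairs {i,j},
   represented by ordered pairs (i,j) with i < j. *)
Definition pairT (n : nat) := {x : 'I_n * 'I_n | (x.1 < x.2)%N}.

Definition graph (n : nat) := {set pairT n}.

Definition adj (n : nat) (E : graph n) (i j : 'I_n) : bool :=
  [exists e in E, (val e == (i, j)) || (val e == (j, i))].

Definition gnp_weight (R : realType) (n : nat) (p : R) (E : graph n) : R :=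
  p ^+ #|E| * (1 - p) ^+ (#|[set: pairT n]| - #|E|).

Definition gnp_prob (R : realType) (n : nat) (p : R) (A : graph n -> bool) : R :=
  \sum_(E : graph n | A E) gnp_weight p E.

Definition dotv (R : realType) (d : nat) (a b : 'rV[R]_d) : R :=
  \sum_(k < d) a 0 k * b 0 k.

Definition cfun (R : realType) (d : nat) (a : 'rV[R]_d.+1) : R :=
  if a == 0 then 0 else (a 0 ord0) ^+ 2 / dotv a a.

(* Values sum_i c(v_i) over orthogonal representations v in R^d (d >= 1). *)
Definition theta_vals (R : realType) (n : nat) (E : graph n) : set R :=
  [set s | exists (d : nat) (v : 'I_n -> 'rV[R]_d.+1),
      (forall i j : 'I_n, adj E i j -> dotv (v i) (v j) = 0) /\
      s = \sum_(i < n) cfun (v i)].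

Definition theta (R : realType) (n : nat) (E : graph n) : R := sup (@theta_vals R n E).

(* Main.v *)
Require Import Defs.
From HB Require Import structures.
From mathcomp Require Import all_boot all_order all_algebra.
From mathcomp Require Import all_classical all_reals.
From mathcomp Require Import all_analysis.
From mathcomp Require Import ring lra.
Import Order.TTheory GRing.Theory Num.Theory.
Local Open Scope ring_scope.
Set Implicit Arguments. Unset Strict Implicit. Unset Printing Implicit Defensive.

(* Proof strategy: Talagrand's convex-distance inequality for finite product
   spaces (vertex exposure), proved by induction, applied to the Lovasz number. *)
Local Open Scope classical_set_scope.
Section Tal.
Variables (R : realType) (S : finType) (w : nat -> S -> R).
Hypothesis hw0 : forall i s, 0 <= w i s.
Hypothesis hw1 : forall i, \sum_s w i s <= 1.

Definition Om k := {ffun 'I_k -> S}.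
Definition Pr k (x : Om k) : R := \prod_(i < k) w i (x i).
Definition PA k (A : {set Om k}) : R := \sum_(x in A) Pr x.
Definition mval k (mu : Om k -> R) (x : Om k) : R :=
  \sum_(i < k) (\sum_(y : Om k) mu y * (y i != x i)%:R) ^+ 2.
Definition isdist k (A : {set Om k}) (mu : Om k -> R) :=
  [/\ forall y, 0 <= mu y, forall y, y \notin A -> mu y = 0 & \sum_y mu y = 1].
Definition Dset k (A : {set Om k}) (x : Om k) : set R :=
  [set v | exists mu, isdist A mu /\ v = mval mu x].
Definition d2 k (A : {set Om k}) (x : Om k) : R := inf (Dset A x).

Lemma Pr_ge0 k (x : Om k) : 0 <= Pr x.
Proof. by apply: prodr_ge0 => i _. Qed.

Lemma PA_ge0 k (A : {set Om k}) : 0 <= PA A.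
Proof. by apply: sumr_ge0 => x _; apply: Pr_ge0. Qed.

Lemma mval_ge0 k mu (x : Om k) : 0 <= mval mu x.
Proof. by apply: sumr_ge0 => i _; apply: sqr_ge0. Qed.

Lemma Dset_lb k (A : {set Om k}) x : lbound (Dset A x) 0.
Proof. by move=> v [mu [_ ->]]; apply: mval_ge0. Qed.

Lemma point_dist k (A : {set Om k}) a : a \in A -> isdist A (fun y => (y == a)%:R).
Proof.
move=> aA; split.
- by move=> y; case: (y == a).
- by move=> y yA; case: eqP => // ya; move: yA; rewrite ya aA.
- by rewrite (bigD1 a) //= eqxx big1 ?addr0 // => y /negPf ->.
Qed.

Lemma Dset_ne k (A : {set Om k}) x a : a \in A -> Dset A x !=set0.
Proof. by move=> aA; exists (mval (fun y => (y == a)%:R) x); exists (fun y => (y == a)%:R); split => //; apply: point_dist. Qed.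

Lemma d2_le k (A : {set Om k}) x mu : isdist A mu -> d2 A x <= mval mu x.
Proof.
move=> hmu; apply: ge_inf; first by exists 0; apply: Dset_lb.
by exists mu.
Qed.

Lemma d2_ge0 k (A : {set Om k}) x : 0 <= d2 A x.
Proof.
have [[a aA]|nA] := pselect (exists a, a \in A).
  by apply: lb_le_inf; [apply: (Dset_ne x aA) | apply: Dset_lb].
rewrite /d2 (_ : Dset A x = set0) ?inf0 //.
apply/seteqP; split => // v [mu [[h0 h1 h2] _]].
move: h2; rewrite big1 => [/esym/eqP|y _]; first by rewrite oner_eq0.
by apply: h1; apply/negP => yA; apply: nA; exists y.
Qed.

Lemma d2_ge k (A : {set Om k}) x t a : a \in A ->
  (forall mu, isdist A mu -> t <= mval mu x) -> t <= d2 A x.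
Proof.
move=> aA h; apply: lb_le_inf; first exact: (Dset_ne x aA).
by move=> v [mu [hmu ->]]; apply: h.
Qed.


Definition ext k (y : Om k) (s : S) : Om k.+1 :=
  [ffun i : 'I_k.+1 => if unlift ord_max i is Some j then y j else s].
Definition ini k (x : Om k.+1) : Om k := [ffun j => x (widen_ord (leqnSn k) j)].

Lemma widen_lift k (j : 'I_k) : widen_ord (leqnSn k) j = lift ord_max j.
Proof. by apply: val_inj; rewrite /= /bump leqNgt ltn_ord. Qed.

Lemma ext_w k (y : Om k) s j : ext y s (widen_ord (leqnSn k) j) = y j.
Proof. by rewrite ffunE widen_lift liftK. Qed.

Lemma ext_m k (y : Om k) s : ext y s ord_max = s.
Proof. by rewrite ffunE unlift_none. Qed.

Lemma ini_ext k (y : Om k) s : ini (ext y s) = y.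
Proof. by apply/ffunP => j; rewrite ffunE ext_w. Qed.

Lemma ext_ini k (x : Om k.+1) : ext (ini x) (x ord_max) = x.
Proof.
apply/ffunP => i; rewrite ffunE; case: unliftP => [j ->|-> //].
by rewrite ffunE widen_lift.
Qed.

Lemma sum_split k (F : Om k.+1 -> R) :
  \sum_(x : Om k.+1) F x = \sum_(y : Om k) \sum_(s : S) F (ext y s).
Proof.
rewrite pair_big /=.
rewrite (reindex (fun p : Om k * S => ext p.1 p.2)) //=.
exists (fun x => (ini x, x ord_max)) => [[y s] _|x _] /=.
  by rewrite ini_ext ext_m.
exact: ext_ini.
Qed.

Lemma Pr_ext k (y : Om k) s : Pr (ext y s) = Pr y * w k s.
Proof.
rewrite /Pr big_ord_recr /= ext_m; congr (_ * _).
by apply: eq_bigr => j _; rewrite ext_w.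
Qed.


Section Mix.
Variables (k : nat) (A : {set Om k.+1}) (om : S).
Definition Bs : {set Om k} := [set y | ext y om \in A].
Definition Cs : {set Om k} := [set y | [exists s, ext y s \in A]].
Definition gs (y : Om k) : S := odflt om [pick s | ext y s \in A].

Lemma gs_spec y : y \in Cs -> ext y (gs y) \in A.
Proof.
rewrite inE /gs => /existsP [s hs].
by case: pickP => [s' -> //|/(_ s)]; rewrite hs.
Qed.

Definition mix (lam : R) (mu1 mu2 : Om k -> R) (x : Om k.+1) : R :=
  (1 - lam) * (x ord_max == om)%:R * mu1 (ini x)
  + lam * (x ord_max == gs (ini x))%:R * mu2 (ini x).

Lemma sum_pick (a : S) (G : S -> R) : \sum_s (s == a)%:R * G s = G a.
Proof.
by rewrite (bigD1 a) //= eqxx mul1r big1 ?addr0 // => s /negPf ->; rewrite mul0r.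
Qed.

Lemma mix_sum lam mu1 mu2 (F : Om k.+1 -> R) :
  \sum_x mix lam mu1 mu2 x * F x =
  (1 - lam) * \sum_y mu1 y * F (ext y om) + lam * \sum_y mu2 y * F (ext y (gs y)).
Proof.
rewrite sum_split !mulr_sumr -big_split /=; apply: eq_bigr => y _.
rewrite /mix.
under eq_bigr => s _ do rewrite ext_m ini_ext mulrDl.
rewrite big_split /=; congr (_ + _).
  rewrite -(sum_pick om (fun s => (1 - lam) * (mu1 y * F (ext y s)))).
  by apply: eq_bigr => s _; ring.
rewrite -(sum_pick (gs y) (fun s => lam * (mu2 y * F (ext y s)))).
by apply: eq_bigr => s _; ring.
Qed.

Lemma mix_dist lam mu1 mu2 : 0 <= lam <= 1 ->
  (forall y, 0 <= mu1 y) -> \sum_y mu1 y = 1 ->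
  (forall y, y \notin Bs -> (1 - lam) * mu1 y = 0) ->
  isdist Cs mu2 -> isdist A (mix lam mu1 mu2).
Proof.
move=> /andP [l0 l1] m10 m11 m1s [m20 m2s m21]; split.
- move=> x; rewrite /mix; apply: addr_ge0; apply: mulr_ge0 => //;
  apply: mulr_ge0 => //; rewrite ?subr_ge0 //; by case: (_ == _).
- move=> x xA; rewrite /mix; rewrite -(ext_ini x) in xA.
  have -> : (1 - lam) * (x ord_max == om)%:R * mu1 (ini x) = 0.
    case: eqP => [e|_]; last by rewrite mulr0 mul0r.
    rewrite mulr1 m1s // inE -e //.
  case: eqP => [e|_]; last by rewrite mulr0 mul0r addr0.
  rewrite m2s ?mulr0 ?addr0 //; apply/negP => /gs_spec; rewrite -e.
  by move/negP: xA.
- have := mix_sum lam mu1 mu2 (fun _ => 1).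
  under eq_bigr do rewrite mulr1.
  move=> ->; under eq_bigr do rewrite mulr1.
  under [X in _ + _ * X]eq_bigr do rewrite mulr1.
  by rewrite m11 m21; ring.
Qed.

Lemma sq_conv (lam b c : R) : 0 <= lam <= 1 ->
  ((1 - lam) * b + lam * c) ^+ 2 <= (1 - lam) * b ^+ 2 + lam * c ^+ 2.
Proof.
move=> /andP [l0 l1].
have h : 0 <= lam * (1 - lam) * (b - c) ^+ 2.
  by apply: mulr_ge0; [apply: mulr_ge0; rewrite ?subr_ge0 | apply: sqr_ge0].
rewrite -subr_ge0; apply: le_trans h _; rewrite le_eqVlt; apply/orP; left.
by apply/eqP; ring.
Qed.

Lemma mix_val lam mu1 mu2 w0 : 0 <= lam <= 1 ->
  (forall y, 0 <= mu2 y) -> \sum_y mu2 y = 1 ->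
  mval (mix lam mu1 mu2) (ext w0 om) <=
  lam ^+ 2 + (1 - lam) * mval mu1 w0 + lam * mval mu2 w0.
Proof.
move=> hl m20 m21; rewrite /mval big_ord_recr /= addrC -addrA.
apply: lerD.
  rewrite mix_sum.
  under eq_bigr do rewrite !ext_m eqxx mulr0.
  under [X in _ + _ * X]eq_bigr do rewrite !ext_m.
  rewrite big1 // mulr0 add0r.
  case/andP: hl => l0 l1.
  have s0 : 0 <= \sum_y mu2 y * (gs y != om)%:R.
    by apply: sumr_ge0 => y _; apply: mulr_ge0 => //; case: (_ != _).
  have s1 : \sum_y mu2 y * (gs y != om)%:R <= 1.
    apply: (@le_trans _ _ (\sum_y mu2 y)); last by rewrite m21.
    by apply: ler_sum => y _; case: (_ != _) => /=; rewrite ?mulr1 ?mulr0.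
  have h1 : 0 <= lam * \sum_y mu2 y * (gs y != om)%:R by apply: mulr_ge0.
  have h2 : lam * \sum_y mu2 y * (gs y != om)%:R <= lam.
    by rewrite -[X in _ <= X]mulr1; apply: ler_wpM2l.
  rewrite expr2 [X in _ <= X]expr2; apply: ler_pM => //.
rewrite !mulr_sumr -big_split /=; apply: ler_sum => i _.
rewrite mix_sum.
under eq_bigr do rewrite !ext_w.
under [X in _ + _ * X]eq_bigr do rewrite !ext_w.
by apply: sq_conv.
Qed.

End Mix.


Lemma has_inf_D k (A : {set Om k}) x a : a \in A -> has_inf (Dset A x).
Proof. by move=> aA; split; [apply: (Dset_ne x aA) | exists 0; apply: Dset_lb]. Qed.

Lemma d2_step1 k (A : {set Om k.+1}) om lam w0 a : 0 <= lam <= 1 -> a \in Bs A om ->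
  d2 A (ext w0 om) <= lam ^+ 2 + (1 - lam) * d2 (Bs A om) w0 + lam * d2 (Cs A) w0.
Proof.
move=> hl aB; have aC : a \in Cs A by rewrite inE; apply/existsP; exists om; rewrite inE in aB.
apply/ler_addgt0Pr => e e0.
have [_ [mu1 [[m10 m1s m11] ->]] h1] := inf_adherent e0 (has_inf_D w0 aB).
have [_ [mu2 [[m20 m2s m21] ->]] h2] := inf_adherent e0 (has_inf_D w0 aC).
have hd : isdist A (mix A om lam mu1 mu2).
  apply: mix_dist => //; first by move=> y /m1s ->; rewrite mulr0.
apply: le_trans (d2_le (ext w0 om) hd) _.
apply: le_trans; [apply: mix_val => //|].
case/andP: hl => l0 l1.
have := ltW h1; have := ltW h2.
rewrite /d2 => h2' h1'.
have e1 : (1 - lam) * mval mu1 w0 <= (1 - lam) * (inf (Dset (Bs A om) w0) + e).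
  by apply: ler_wpM2l; rewrite ?subr_ge0.
have e2 : lam * mval mu2 w0 <= lam * (inf (Dset (Cs A) w0) + e).
  by apply: ler_wpM2l.
lra.
Qed.

Lemma d2_step2 k (A : {set Om k.+1}) om w0 a : a \in A ->
  d2 A (ext w0 om) <= 1 + d2 (Cs A) w0.
Proof.
move=> aA; have aC : ini a \in Cs A.
  by rewrite inE; apply/existsP; exists (a ord_max); rewrite ext_ini.
apply/ler_addgt0Pr => e e0.
have [_ [mu2 [[m20 m2s m21] ->]] h2] := inf_adherent e0 (has_inf_D w0 aC).
have hd : isdist A (mix A om 1 mu2 mu2).
  apply: mix_dist => //; first by rewrite lexx ler01.
  by move=> y _; rewrite subrr mul0r.
apply: le_trans (d2_le (ext w0 om) hd) _.
apply: le_trans; [apply: mix_val => //; by rewrite lexx ler01|].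
rewrite subrr mul0r addr0 expr1n mul1r.
rewrite /d2; lra.
Qed.


Lemma expR_conv (l u v : R) : 0 <= l <= 1 ->
  expR ((1 - l) * u + l * v) <= (1 - l) * expR u + l * expR v.
Proof.
move=> /andP [l0 l1]; set z := (1 - l) * u + l * v.
have hu : expR z * (1 + (u - z)) <= expR u.
  have -> : expR u = expR z * expR (u - z) by rewrite -expRD; congr expR; ring.
  by apply: ler_wpM2l; [apply: expR_ge0 | apply: expR_ge1Dx].
have hv : expR z * (1 + (v - z)) <= expR v.
  have -> : expR v = expR z * expR (v - z) by rewrite -expRD; congr expR; ring.
  by apply: ler_wpM2l; [apply: expR_ge0 | apply: expR_ge1Dx].
have e1 : (1 - l) * (expR z * (1 + (u - z))) <= (1 - l) * expR u.
  by apply: ler_wpM2l; rewrite ?subr_ge0.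
have e2 : l * (expR z * (1 + (v - z))) <= l * expR v by apply: ler_wpM2l.
have -> : expR z = (1 - l) * (expR z * (1 + (u - z))) + l * (expR z * (1 + (v - z))).
  rewrite /z; ring.
lra.
Qed.

Lemma expR_inv (x : R) : expR x * (1 - x) <= 1.
Proof.
have h := expR_ge1Dx (- x).
have := expR_gt0 x => e0.
rewrite -[X in _ <= X](mulfV (lt0r_neq0 e0)) -expRN; apply: ler_wpM2l; first exact: ltW.
exact: h.
Qed.


Lemma PA_split k (A : {set Om k.+1}) : PA A = \sum_s w k s * PA (Bs A s).
Proof.
rewrite /PA big_mkcond sum_split exchange_big /=; apply: eq_bigr => s _.
rewrite [in RHS]big_mkcond mulr_sumr; apply: eq_bigr => y _.
rewrite inE Pr_ext; case: (_ \in _) => /=; [exact: mulrC | by rewrite mulr0].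
Qed.

Lemma E_split k (F : Om k.+1 -> R) :
  \sum_x Pr x * F x = \sum_s w k s * \sum_y Pr y * F (ext y s).
Proof.
rewrite sum_split exchange_big /=; apply: eq_bigr => s _.
rewrite mulr_sumr; apply: eq_bigr => y _; rewrite Pr_ext; ring.
Qed.

Lemma PA_sub k (B C : {set Om k}) : {subset B <= C} -> PA B <= PA C.
Proof.
move=> sBC; rewrite /PA [\sum_(y in C) _]big_mkcond [\sum_(y in B) _]big_mkcond; apply: ler_sum => y _.
case: ifP => yB; first by rewrite (sBC _ yB).
by case: ifP => // _; apply: Pr_ge0.
Qed.

Lemma Bs_sub k (A : {set Om k.+1}) s : {subset Bs A s <= Cs A}.
Proof. by move=> y; rewrite !inE => h; apply/existsP; exists s. Qed.

Definition JJ k (A : {set Om k}) := \sum_y Pr y * expR (d2 A y / 4).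

Lemma JJ_ge0 k (A : {set Om k}) : 0 <= JJ A.
Proof. by apply: sumr_ge0 => y _; apply: mulr_ge0; [apply: Pr_ge0 | apply: expR_ge0]. Qed.

Lemma step_s k (A : {set Om k.+1}) s :
  PA (Bs A s) * JJ (Bs A s) <= 1 -> PA (Cs A) * JJ (Cs A) <= 1 -> 0 < PA (Cs A) ->
  PA (Cs A) * (\sum_y Pr y * expR (d2 A (ext y s) / 4)) <= 2 - PA (Bs A s) / PA (Cs A).
Proof.
set b := PA (Bs A s); set c := PA (Cs A); set I := \sum_y _.
move=> hB hC c0.
have b0 : 0 <= b by apply: PA_ge0.
have bc : b <= c by apply: PA_sub; apply: Bs_sub.
set r := b / c.
have r0 : 0 <= r by apply: divr_ge0 => //; apply: ltW.
have r1 : r <= 1 by rewrite ler_pdivrMr // mul1r.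
have JB0 := JJ_ge0 (Bs A s); have JC0 := JJ_ge0 (Cs A).
have [rs|rl] := lerP r (1/2).
- (* lambda = 1 *)
  have [y0 y0C] : exists y0, y0 \in Cs A.
    apply/existsP; apply: contraTT c0 => /existsPn h.
    by rewrite -leNgt /c /PA big1 // => y yC; move: (h y); rewrite yC.
  have aA := @gs_spec k A s y0 y0C.
  have hI : I <= expR (1/4) * JJ (Cs A).
    rewrite /I /JJ mulr_sumr; apply: ler_sum => y _.
    rewrite mulrCA; apply: ler_wpM2l; first exact: Pr_ge0.
    rewrite -expRD ler_expR.
    have := d2_step2 s y aA; lra.
  have e14 : expR (1/4) * (1 - 1/4) <= 1 := expR_inv _.
  have e0 : 0 <= expR (1/4) := expR_ge0 _.
  have : c * I <= expR (1/4) * (c * JJ (Cs A)).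
    by rewrite mulrCA; apply: ler_wpM2l => //; apply: ltW.
  have : expR (1/4) * (c * JJ (Cs A)) <= expR (1/4) by rewrite -[X in _ <= X]mulr1; apply: ler_wpM2l.
  lra.
- have b0' : 0 < b.
    rewrite lt0r b0 andbT; apply: contraTneq rl => b_0; rewrite /r b_0 mul0r -leNgt; lra.
  have [y0 y0B] : exists y0, y0 \in Bs A s.
    apply/existsP; apply: contraTT b0' => /existsPn h.
    by rewrite -leNgt /b /PA big1 // => y yB; move: (h y); rewrite yB.
  set sg := 1 - r; set lam := 2 * sg.
  have hl : 0 <= lam <= 1 by apply/andP; split; rewrite /lam /sg; lra.
  set E := expR (lam ^+ 2 / 4).
  have hI : I <= E * ((1 - lam) * JJ (Bs A s) + lam * JJ (Cs A)).
    rewrite /I /JJ !mulr_sumr -big_split mulr_sumr /=; apply: ler_sum => y _.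
    have -> : E * ((1 - lam) * (Pr y * expR (d2 (Bs A s) y / 4)) +
       lam * (Pr y * expR (d2 (Cs A) y / 4))) =
       Pr y * (E * ((1 - lam) * expR (d2 (Bs A s) y / 4) + lam * expR (d2 (Cs A) y / 4))).
      by ring.
    apply: ler_wpM2l; first exact: Pr_ge0.
    apply: le_trans (_ : E * expR ((1 - lam) * (d2 (Bs A s) y / 4) + lam * (d2 (Cs A) y / 4)) <= _).
      rewrite /E -expRD ler_expR.
      have := d2_step1 y hl y0B.
      case/andP: hl => l0 l1 => h; lra.
    apply: ler_wpM2l; first exact: expR_ge0.
    exact: expR_conv.
  have E1 : 1 <= E by rewrite /E -expR0 ler_expR; apply: divr_ge0 => //; apply: sqr_ge0.
  have Einv : E * (1 - sg ^+ 2) <= 1.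
    have -> : sg ^+ 2 = lam ^+ 2 / 4 by rewrite /lam; field.
    exact: expR_inv.
  set X := c * JJ (Bs A s); set Y := c * JJ (Cs A).
  have X0 : 0 <= X by apply: mulr_ge0 => //; apply: ltW.
  have Y1 : Y <= 1 by [].
  have Xr : X * r <= 1.
    have -> : X * r = b * JJ (Bs A s) by rewrite /X /r; field; apply: lt0r_neq0.
    exact: hB.
  have hcI : c * I <= E * ((1 - lam) * X + lam * Y).
    have := ler_wpM2l (ltW c0) hI; move/le_trans; apply.
    rewrite le_eqVlt; apply/orP; left; apply/eqP; rewrite /X /Y; ring.
  set T := (1 - lam) * X + lam * Y.
  have hs : 0 <= sg < 1/2 by apply/andP; split; rewrite /sg; lra.
  have T0 : 0 <= T.
    rewrite /T; apply: addr_ge0; apply: mulr_ge0; rewrite /lam; try lra.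
    by apply: mulr_ge0 => //; apply: ltW.
  have hT : T * (1 - sg) <= 1 - 2 * sg ^+ 2.
    have h1 : (1 - lam) * (X * (1 - sg)) <= (1 - lam) * 1.
      by apply: ler_wpM2l; [rewrite /lam; lra | rewrite /sg opprB addrC subrK].
    have h2 : lam * (Y * (1 - sg)) <= lam * (1 - sg).
      apply: ler_wpM2l; [rewrite /lam; lra|].
      rewrite -[X in _ <= X]mul1r; apply: ler_wpM2r => //; rewrite /sg; lra.
    have -> : T * (1 - sg) = (1 - lam) * (X * (1 - sg)) + lam * (Y * (1 - sg)) by rewrite /T; ring.
    have : lam * (1 - sg) = 2 * sg - 2 * sg ^+ 2 by rewrite /lam; ring.
    rewrite /lam in h1 h2 * => e; lra.
  have hET : E * T * (1 - sg) <= (1 + sg) * (1 - sg).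
    rewrite -mulrA.
    have : E * (T * (1 - sg)) <= E * (1 - 2 * sg ^+ 2).
      by apply: ler_wpM2l => //; lra.
    have : E * sg ^+ 2 >= sg ^+ 2.
      by rewrite -[X in X <= _]mul1r; apply: ler_wpM2r => //; apply: sqr_ge0.
    have -> : (1 + sg) * (1 - sg) = 1 - sg ^+ 2 by ring.
    have -> : E * (1 - 2 * sg ^+ 2) = E * (1 - sg ^+ 2) - E * sg ^+ 2 by ring.
    lra.
  have hET' : E * T <= 1 + sg.
    by rewrite -(ler_pM2r (_ : 0 < 1 - sg)) //; lra.
  rewrite /sg in hET'; move: hcI hET'; rewrite -/T => h1 h2; lra.
Qed.


Lemma Om0_eq (x y : Om 0) : x = y.
Proof. by apply/ffunP => -[]. Qed.

Theorem talagrand k (A : {set Om k}) : PA A * JJ A <= 1.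
Proof.
elim: k A => [|k IH] A.
  have [[a aA]|nA] := pselect (exists a, a \in A).
    have sum1 (F : Om 0 -> R) : \sum_x F x = F a.
      by rewrite (bigD1 a) //= big1 ?addr0 // => y /eqP []; apply: Om0_eq.
    rewrite /JJ /PA big_mkcond !sum1 aA /Pr big_ord0 !mul1r.
    rewrite -[X in _ <= X]expR0 ler_expR.
    have := d2_le a (point_dist aA); rewrite /mval big_ord0 => h; lra.
  rewrite /PA big1 ?mul0r // => x xA; case: nA; by exists x.
have c0 := PA_ge0 (Cs A).
rewrite /JJ E_split PA_split.
have [cz|cp] := eqVneq (PA (Cs A)) 0.
  rewrite big1 ?mul0r // => s _.
  have : PA (Bs A s) <= 0 by rewrite -cz; apply: PA_sub; apply: Bs_sub.
  have := PA_ge0 (Bs A s) => h1 h2.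
  have -> : PA (Bs A s) = 0 by apply/eqP; rewrite eq_le h2 h1.
  by rewrite mulr0.
have cpos : 0 < PA (Cs A) by rewrite lt0r cp c0.
set c := PA (Cs A).
set Q := \sum_s w k s.
set rho := (\sum_s w k s * PA (Bs A s)) / c.
have hM : \sum_s w k s * (c * \sum_y Pr y * expR (d2 A (ext y s) / 4)) <= 2 * Q - rho.
  rewrite /rho /Q mulr_sumr mulr_suml -sumrB; apply: ler_sum => s _.
  have := step_s (IH (Bs A s)) (IH (Cs A)) cpos.
  rewrite -/c => h.
  have -> : 2 * w k s - w k s * PA (Bs A s) / c = w k s * (2 - PA (Bs A s) / c) by ring.
  by apply: ler_wpM2l.
have rho0 : 0 <= rho.
  apply: divr_ge0; last exact: ltW.
  by apply: sumr_ge0 => s _; apply: mulr_ge0 => //; apply: PA_ge0.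
have Q0 : 0 <= Q by apply: sumr_ge0.
have Q1 : Q <= 1 by apply: hw1.
have -> : \sum_s w k s * PA (Bs A s) = rho * c.
  by rewrite /rho mulrAC -mulrA divff ?mulr1 // lt0r_neq0.
have -> : \sum_s w k s * \sum_y Pr y * expR (d2 A (ext y s) / 4) =
   (\sum_s w k s * (c * \sum_y Pr y * expR (d2 A (ext y s) / 4))) / c.
  rewrite mulr_suml; apply: eq_bigr => s _; field; exact: lt0r_neq0.
set M := \sum_s _.
have -> : rho * c * (M / c) = rho * M by field; exact: lt0r_neq0.
have : rho * M <= rho * (2 * Q - rho) by apply: ler_wpM2l.
have : 0 <= (Q - rho) ^+ 2 by apply: sqr_ge0.
have : Q * Q <= 1 by rewrite -[X in _ <= X]mulr1; apply: ler_pM.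
nra.
Qed.

End Tal.

Local Close Scope classical_set_scope.

Lemma sum_set_prod (R : realType) (T : finType) (f : T -> bool -> R) :
  \sum_(X : {set T}) \prod_(e : T) f e (e \in X) = \prod_(e : T) (f e true + f e false).
Proof.
under [RHS]eq_bigr do rewrite -big_bool.
rewrite bigA_distr_bigA /=.
rewrite (reindex (fun g : {ffun T -> bool} => [set e | g e])) /=; last first.
  exists (fun X : {set T} => [ffun e => e \in X]) => [g _|X _].
    by apply/ffunP => e; rewrite ffunE inE.
  by apply/setP => e; rewrite inE ffunE.
by apply: eq_bigr => g _; apply: eq_bigr => e _; rewrite inE.
Qed.

Section Graph.
Variables (R : realType) (n : nat) (p : R).
Hypothesis hp : 0 < p < 1.

Definition ST := {set pairT n}.
Definition blk (e : pairT n) : 'I_n := (val e).2.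

Definition wg (i : nat) (X : ST) : R :=
  \prod_(e : pairT n) (if (blk e : nat) == i then (if e \in X then p else 1 - p)
                       else (if e \in X then 0 else 1)).

Lemma wg0 i X : 0 <= wg i X.
Proof.
case/andP: hp => p0 p1.
apply: prodr_ge0 => e _; case: ifP => _; case: ifP => _ //; lra.
Qed.

Lemma wg1 i : \sum_X wg i X <= 1.
Proof.
rewrite /wg (sum_set_prod (fun e b => if (blk e : nat) == i then (if b then p else 1 - p)
                       else (if b then 0 else 1))).
rewrite big1 // => e _; case: ifP => _; ring.
Qed.

Definition gr (x : Om ST n) : graph n := [set e | e \in x (blk e)].
Definition nb (E : graph n) : Om ST n := [ffun i => [set e in E | blk e == i]].

Lemma gr_nb E : gr (nb E) = E.
Proof. by apply/setP => e; rewrite !inE ffunE inE eqxx andbT. Qed.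

Lemma Pr_nb E : Pr wg (nb E) = gnp_weight p E.
Proof.
rewrite /Pr /wg.
have -> : \prod_(i < n) \prod_(e : pairT n) (if (blk e : nat) == i
          then (if e \in nb E i then p else 1 - p) else (if e \in nb E i then 0 else 1))
        = \prod_(i < n) \prod_(e : pairT n) (if blk e == i then (if e \in E then p else 1 - p) else 1).
  apply: eq_bigr => i _; apply: eq_bigr => e _; rewrite ffunE inE.
  have -> : (blk e == i) = ((blk e : nat) == i) by [].
  by case: (_ == _); rewrite ?andbT ?andbF.
rewrite exchange_big /=.
have -> : \prod_(e : pairT n) \prod_(i < n) (if blk e == i then (if e \in E then p else 1 - p) else 1)
   = \prod_(e : pairT n) (if e \in E then p else 1 - p).
  apply: eq_bigr => e _; rewrite (bigD1 (blk e)) //= eqxx big1 ?mulr1 // => i /negPf.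
  by rewrite eq_sym => ->.
rewrite (bigID (fun e => e \in E)) /=.
rewrite (eq_bigr (fun _ => p)); last by move=> e ->.
rewrite [X in _ * X](eq_bigr (fun _ => 1 - p)); last by move=> e /negPf ->.
rewrite !prodr_const /gnp_weight.
have -> : #|[set: pairT n]%classic| = #|{: pairT n}|.
  by apply: eq_card => e; rewrite classical_sets.in_setT.
congr (_ * _); congr (_ ^+ _).
have := cardC (mem E); rewrite /= => <-; rewrite addKn.
by apply: eq_card => e; rewrite !inE.
Qed.

Lemma Pr_other E x : gr x = E -> x != nb E -> Pr wg x = 0.
Proof.
move=> gx hx.
have /existsP [i hi] : [exists i, x i != nb E i].
  apply: contraR hx => /existsPn h; apply/eqP/ffunP => i.
  by apply/eqP; move: (h i); rewrite negbK.
have /existsP [e he] : [exists e, (e \in x i) != (e \in nb E i)].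
  apply: contraR hi => /existsPn h; apply/eqP/setP => e.
  by apply/eqP; move: (h e); rewrite negbK.
move: he; rewrite ffunE inE -gx inE.
have [be|nbe] := eqVneq (blk e) i; first by rewrite be andbT eqxx.
rewrite andbF; case exi: (e \in x i) => // _.
rewrite /Pr (bigD1 i) //= /wg (bigD1 e) //= exi.
have -> : ((blk e : nat) == i) = false by apply/negP => h; case/eqP: nbe; apply: val_inj; apply/eqP.
by rewrite !mul0r.
Qed.

Lemma transfer (F : graph n -> bool) : gnp_prob p F = PA wg [set x | F (gr x)].
Proof.
rewrite /PA /gnp_prob (partition_big gr predT) //=.
rewrite big_mkcond /=; apply: eq_bigr => E _.
case fE: (F E).
  rewrite (bigD1 (nb E)) /=; last by rewrite inE gr_nb fE eqxx.
  rewrite big1 ?addr0 ?Pr_nb // => x /andP [/andP [_ /eqP gx] hx].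
  exact: Pr_other gx hx.
rewrite big1 // => x /andP []; rewrite inE => h /eqP gx.
by move: h; rewrite gx fE.
Qed.

End Graph.

Section Theta.
Variable (R : realType).

Lemma dotv0l d (b : 'rV[R]_d) : dotv 0 b = 0.
Proof. by rewrite /dotv big1 // => k _; rewrite mxE mul0r. Qed.
Lemma dotv0r d (b : 'rV[R]_d) : dotv b 0 = 0.
Proof. by rewrite /dotv big1 // => k _; rewrite mxE mulr0. Qed.

Lemma dotv_ge d (a : 'rV[R]_d.+1) : a 0 ord0 ^+ 2 <= dotv a a.
Proof.
rewrite /dotv (bigD1 ord0) //= expr2 lerDl.
by apply: sumr_ge0 => k _; rewrite -expr2 sqr_ge0.
Qed.

Lemma dotv_ge0 d (a : 'rV[R]_d.+1) : 0 <= dotv a a.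
Proof. exact: le_trans (sqr_ge0 _) (dotv_ge a). Qed.

Lemma cfun_ge0 d (a : 'rV[R]_d.+1) : 0 <= cfun a.
Proof.
rewrite /cfun; case: ifP => _ //.
by apply: divr_ge0; [apply: sqr_ge0 | apply: dotv_ge0].
Qed.

Lemma cfun_le1 d (a : 'rV[R]_d.+1) : cfun a <= 1.
Proof.
rewrite /cfun; case: ifP => _ //.
have [D0|Dn] := eqVneq (dotv a a) 0; first by rewrite D0 invr0 mulr0.
have Dp : 0 < dotv a a by rewrite lt0r Dn dotv_ge0.
by rewrite ler_pdivrMr // mul1r dotv_ge.
Qed.

Lemma cfun0 d : cfun (0 : 'rV[R]_d.+1) = 0.
Proof. by rewrite /cfun eqxx. Qed.

Lemma vals_ub n (E : graph n) : ubound (@theta_vals R n E) n%:R.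
Proof.
move=> s [d [v [_ ->]]].
apply: le_trans (_ : \sum_(i < n) (1 : R) <= _).
  by apply: ler_sum => i _; apply: cfun_le1.
by rewrite sumr_const card_ord.
Qed.

Lemma vals0 n (E : graph n) : @theta_vals R n E 0.
Proof.
exists 0%N, (fun _ => 0); split.
  by move=> i j _; rewrite dotv0l.
by rewrite big1 // => i _; rewrite cfun0.
Qed.

Lemma has_sup_vals n (E : graph n) : has_sup (@theta_vals R n E).
Proof. by split; [exists 0; apply: vals0 | exists n%:R; apply: vals_ub]. Qed.

Lemma theta_ub n (E : graph n) d (v : 'I_n -> 'rV[R]_d.+1) :
  (forall i j, adj E i j -> dotv (v i) (v j) = 0) ->
  \sum_(i < n) cfun (v i) <= theta R E.
Proof.
move=> hv; apply: sup_upper_bound; first exact: has_sup_vals.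
by exists d, v.
Qed.

Lemma theta_ge0 n (E : graph n) : 0 <= theta R E.
Proof. by apply: sup_upper_bound; [apply: has_sup_vals | apply: vals0]. Qed.

Lemma theta_restrict n (x y : Om (ST n) n) d (v : 'I_n -> 'rV[R]_d.+1) :
  (forall i j, adj (gr x) i j -> dotv (v i) (v j) = 0) ->
  \sum_(i < n) (x i == y i)%:R * cfun (v i) <= theta R (gr y).
Proof.
move=> hv.
pose v' i := if x i == y i then v i else 0.
have -> : \sum_(i < n) (x i == y i)%:R * cfun (v i) = \sum_(i < n) cfun (v' i).
  apply: eq_bigr => i _; rewrite /v'; case: (_ == _) => /=; rewrite ?mul1r ?mul0r ?cfun0 //.
apply: theta_ub => i j hij; rewrite /v'.
case: eqP => [xi|_]; last by rewrite dotv0l.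
case: eqP => [xj|_]; last by rewrite dotv0r.
apply: hv; move/existsP: hij => [e /andP [ey he]]; apply/existsP; exists e.
rewrite he andbT; move: ey; rewrite !inE.
have : blk e = i \/ blk e = j.
  by case/orP: he => /eqP h; rewrite /blk h; [right|left].
by case=> ->; rewrite ?xi ?xj.
Qed.

End Theta.

Lemma d2_bound (R : realType) n (m xi theta0 : R) (x : Om (ST n) n) a :
  let Aset := [set y : Om (ST n) n | theta R (gr y) <= m] in
  a \in Aset -> 0 < theta0 -> 10 <= xi ->
  m + xi <= theta R (gr x) -> theta R (gr x) <= theta0 ->
  (19 / 20 * xi) ^+ 2 / theta0 <= d2 R Aset x.
Proof.
move=> Aset aA th0 hxi h1 h2.
apply: (d2_ge aA) => mu [m0 ms m1].
have e0 : 0 < xi / 20 by apply: divr_gt0 => //; lra.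
have [s0 [d [v [hv ->]]] hs] := sup_adherent e0 (has_sup_vals R (gr x)).
set c := fun i => cfun (v i).
set s := \sum_(i < n) cfun (v i).
have hy : forall y, y \in Aset -> s - m <= \sum_(i < n) c i * (y i != x i)%:R.
  move=> y; rewrite inE => hyA.
  have := theta_restrict y hv.
  have -> : s = \sum_(i < n) (x i == y i)%:R * cfun (v i) + \sum_(i < n) c i * (y i != x i)%:R.
    rewrite -big_split /=; apply: eq_bigr => i _; rewrite /c eq_sym.
    by case: (_ == _) => /=; ring.
  lra.
set a_ := fun i : 'I_n => \sum_y mu y * (y i != x i)%:R.
have hca : s - m <= \sum_(i < n) c i * a_ i.
  have -> : \sum_(i < n) c i * a_ i = \sum_y mu y * \sum_(i < n) c i * (y i != x i)%:R.
    rewrite /a_; under eq_bigr do rewrite mulr_sumr.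
    rewrite exchange_big /=; apply: eq_bigr => y _; rewrite mulr_sumr.
    by apply: eq_bigr => i _; ring.
  have -> : s - m = \sum_y mu y * (s - m) by rewrite -mulr_suml m1 mul1r.
  apply: ler_sum => y _.
  case yA: (y \in Aset); first by apply: ler_wpM2l => //; apply: hy.
  by rewrite ms ?yA // !mul0r.
have hc2 : \sum_(i < n) c i ^+ 2 <= s.
  apply: ler_sum => i _; rewrite /c expr2.
  rewrite -[X in _ <= X]mulr1; apply: ler_wpM2l; [apply: cfun_ge0 | apply: cfun_le1].
set T := 19 / 20 * xi.
set u := T / theta0.
have u0 : 0 <= u by apply: divr_ge0; rewrite /T; lra.
have hmv : 2 * u * (\sum_(i < n) c i * a_ i) - u ^+ 2 * (\sum_(i < n) c i ^+ 2) <= mval mu x.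
  rewrite /mval !mulr_sumr -sumrB; apply: ler_sum => i _.
  have := sqr_ge0 (a_ i - u * c i); rewrite /a_ => h.
  rewrite -subr_ge0; apply: le_trans h _; rewrite le_eqVlt; apply/orP; left; apply/eqP; ring.
have sth : s <= theta0.
  apply: le_trans h2; exact: (theta_ub hv).
have smT : T <= s - m by move: hs h1; rewrite /theta -/s /T => hs' h1'; lra.
have k1 : 2 * u * T <= 2 * u * (\sum_(i < n) c i * a_ i).
  apply: ler_wpM2l; first by apply: mulr_ge0.
  lra.
have k2 : u ^+ 2 * (\sum_(i < n) c i ^+ 2) <= u ^+ 2 * theta0.
  by apply: ler_wpM2l; [apply: sqr_ge0 | lra].
have -> : T ^+ 2 / theta0 = 2 * u * T - u ^+ 2 * theta0.
  by rewrite /u; field; apply: lt0r_neq0.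
lra.
Qed.

Theorem lemma1 (R : realType) (n : nat) (p m theta0 xi : R) :
  0 < p < 1 ->
  @gnp_prob R n p (fun E => @theta R n E <= m) >= 1 / 2 ->
  @gnp_prob R n p (fun E => @theta R n E >= m) >= 1 / 2 ->
  0 < theta0 ->
  10 <= xi ->
  @gnp_prob R n p (fun E => (m + xi <= @theta R n E) && (@theta R n E <= theta0))
    <= 2 * expR (- (xi ^+ 2) / (5 * theta0)).
Proof.
move=> hp hA _ th0 hxi.
rewrite transfer in hA; rewrite transfer.
set Aset := [set x | theta R (gr x) <= m] in hA.
set Ev := [set x | _].
have tal := talagrand (@wg0 R n p hp) (@wg1 R n p) Aset.
have PA0 : 0 < PA (@wg R n p) Aset by lra.
have [a aA] : exists a, a \in Aset.
  apply/existsP; apply: contraTT PA0 => /existsPn h.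
  by rewrite -leNgt /PA big1 // => y yA; move: (h y); rewrite yA.
set T := 19 / 20 * xi.
set t2 := T ^+ 2 / theta0.
have hd : forall x, x \in Ev -> t2 <= d2 R Aset x.
  move=> x; rewrite inE => /andP [h1 h2].
  exact: (d2_bound aA th0 hxi h1 h2).
have hJ : PA (@wg R n p) Ev * expR (t2 / 4) <= JJ (@wg R n p) Aset.
  rewrite /PA /JJ mulr_suml [X in X <= _]big_mkcond /=; apply: ler_sum => x _.
  case: ifP => xE; last by apply: mulr_ge0; [apply: Pr_ge0; apply: wg0 | apply: expR_ge0].
  apply: ler_wpM2l; first by apply: Pr_ge0; apply: wg0.
  rewrite ler_expR; have := hd x xE; lra.
have PE0 : 0 <= PA (@wg R n p) Ev by apply: PA_ge0; apply: wg0.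
have J0 : 0 <= JJ (@wg R n p) Aset by apply: JJ_ge0; apply: wg0.
have e0 := expR_gt0 (t2 / 4).
have h3 : PA (@wg R n p) Ev * expR (t2 / 4) <= 2.
  have : PA (@wg R n p) Ev * expR (t2 / 4) * PA (@wg R n p) Aset <= 1.
    apply: le_trans tal; rewrite mulrC; apply: ler_wpM2l; [lra | exact: hJ].
  have : PA (@wg R n p) Ev * expR (t2 / 4) * (1 / 2) <= PA (@wg R n p) Ev * expR (t2 / 4) * PA (@wg R n p) Aset.
    by apply: ler_wpM2l => //; apply: mulr_ge0 => //; apply: ltW.
  lra.
have h4 : PA (@wg R n p) Ev <= 2 * expR (- (t2 / 4)).
  rewrite expRN ler_pdivlMr //.
have h5 : - (t2 / 4) <= - xi ^+ 2 / (5 * theta0).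
  rewrite -subr_le0.
  have -> : - (t2 / 4) - (- xi ^+ 2 / (5 * theta0)) = - ((41 / 1600) * (xi ^+ 2 / theta0)).
    by rewrite /t2 /T; field; apply: lt0r_neq0.
  have : 0 <= xi ^+ 2 / theta0 by apply: divr_ge0; [apply: sqr_ge0 | apply: ltW].
  move=> h; lra.
apply: le_trans h4 _; apply: ler_wpM2l => //; rewrite ler_expR //.
Qed.
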